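(* Assume $\mathbb Q\subset k$, let $R=\operatorname{End}_k(A)$ and $D\in\mathcal U^p(R;\Delta)$. The following are equivalent: (a) $D\in\operatorname{HS}^p_k(A;\Delta)$; (b) $\varepsilon^{\mathfrak d}(D)\in\operatorname{Der}_k(A)[[{\bf s}]]_\Delta$ for every $k$-derivation $\mathfrak d:k[[{\bf s}]]_\Delta\to k[[{\bf s}]]_\Delta$; (c) $\varepsilon(D)\in\operatorname{Der}_k(A)[[{\bf s}]]_\Delta$.
   Context: $k$ is a commutative ring, $A$ a commutative $k$-algebra, $R=\operatorname{End}_k(A)$; ${\bf s}=\{s_1,\dots,s_p\}$ commuting variables, ${\bf s}^\alpha=s_1^{\alpha_1}\cdots s_p^{\alpha_p}$, $|\alpha|=\sum\alpha_i$. A co-ideal is a non-empty $\Delta\subset\mathbb N^p$ with $\alpha\in\Delta,\alpha'\le\alpha$ (componentwise) $\Rightarrow\alpha'\in\Delta$. For a ring/group $M$, $M[[{\bf s}]]_\Delta$ is the set of formal sums $\sum_{\alpha\in\Delta}m_\alpha{\bf s}^\alpha$ (truncated product for rings, variables central). $\mathcal U^p(R;\Delta)$ is the group of $r\in R[[{\bf s}]]_\Delta$ with $r_0=1$, $r^*$ the inverse. For a $k$-derivation $\mathfrak d$ of $k[[{\bf s}]]_\Delta$, $\mathfrak d_R(\sum r_\alpha{\bf s}^\alpha)=\sum r_\alpha\mathfrak d({\bf s}^\alpha)$ and $\varepsilon^{\mathfrak d}(r)=r^*\mathfrak d_R(r)$; $\varepsilon(r)=\varepsilon^{\boldsymbol\chi}(r)=r^*\sum_\alpha|\alpha|r_\alpha{\bf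 s}^\alpha$, where $\boldsymbol\chi=\sum_is_i\partial/\partial s_i$. $\operatorname{HS}^p_k(A;\Delta)$ is the set of $D=\sum_{\alpha\in\Delta}D_\alpha{\bf s}^\alpha\in R[[{\bf s}]]_\Delta$ with $D_0=\mathrm{Id}_A$ and $D_\alpha(xy)=\sum_{\beta+\gamma=\alpha}D_\beta(x)D_\gamma(y)$ for all $x,y\in A$, $\alpha\in\Delta$. *)

(* Defs.v *)
From HB Require Import structures.
From mathcomp Require Import all_boot all_order all_algebra.
Set Implicit Arguments. Unset Strict Implicit. Unset Printing Implicit Defensive.
Import GRing.Theory.
Local Open Scope ring_scope.

Definition midx (p : nat) := 'I_p -> nat.

Section Defs.
Variable p : nat.

Definition msize (a : midx p) : nat := (\sum_(i < p) a i)%N.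
Definition mzero : midx p := fun _ => 0%N.
Definition misz (a : midx p) : bool := [forall i, a i == 0%N].
Definition mle (a b : midx p) : bool := [forall i, (a i <= b i)%N].
Definition msub (a b : midx p) : midx p := fun i => (a i - b i)%N.
Definition mi_of (N : nat) (b : {ffun 'I_p -> 'I_N}) : midx p :=
  fun i => nat_of_ord (b i).

Definition coideal (Delta : pred (midx p)) : Prop :=
  (exists a, Delta a) /\
  (forall a a', Delta a -> (forall i, (a' i <= a i)%N) -> Delta a').

(* sum over all decompositions beta + gamma = alpha of F beta gamma
   (beta ranges over all beta <= alpha, each exactly once) *)
Definition conv (V : nmodType) (a : midx p) (F : midx p -> midx p -> V) : V :=
  \sum_(b : {ffun 'I_p -> 'I_(msize a).+1} | mle (mi_of b) a)
     F (mi_of b) (msub a (mi_of b)).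

(* the monomial s^alpha, as a power series with coefficients in k *)
Definition mono (k : nzSemiRingType) (a : midx p) : midx p -> k :=
  fun b => if [forall i, b i == a i] then 1 else 0.

(* truncated product in k[[s]] (meaningful modulo Delta) *)
Definition smul (k : nzSemiRingType) (f g : midx p -> k) : midx p -> k :=
  fun a => conv a (fun b c => f b * g c).

Definition eqD (Delta : pred (midx p)) (T : Type) (f g : midx p -> T) : Prop :=
  forall a, Delta a -> f a = g a.

(* k-derivations of k[[s]]_Delta, acting on representatives *)
Definition isSDer (k : comNzRingType) (Delta : pred (midx p))
    (d : (midx p -> k) -> (midx p -> k)) : Prop :=
  (forall f g, eqD Delta f g -> eqD Delta (d f) (d g)) /\
  (forall (c : k) f g,
      eqD Delta (d (fun a => c * f a + g a)) (fun a => c * d f a + d g a)) /\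
  (forall f g,
      eqD Delta (d (smul f g)) (fun a => smul (d f) g a + smul f (d g) a)).

Definition klinear (k : comNzRingType) (A : lmodType k) (f : A -> A) : Prop :=
  forall (c : k) x y, f (c *: x + y) = c *: f x + f y.

Definition isDer (k : comNzRingType) (A : comAlgType k) (f : A -> A) : Prop :=
  klinear f /\ forall x y : A, f (x * y) = x * f y + f x * y.

Section Series.
Variables (k : comNzRingType) (A : comAlgType k).

Definition inU (Delta : pred (midx p)) (D : midx p -> A -> A) : Prop :=
  (forall a, Delta a -> klinear (D a)) /\ (forall x, D mzero x = x).

Definition isHS (Delta : pred (midx p)) (D : midx p -> A -> A) : Prop :=
  (forall a, Delta a -> klinear (D a)) /\ (forall x, D mzero x = x) /\
  (forall a, Delta a -> forall x y : A,
      D a (x * y) = conv a (fun b c => D b x * D c y)).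

(* inverse D^* of D (with D_0 = Id), by the recursion coming from D^* D = 1:
   D^*_0 = Id, D^*_a = - sum_{b + c = a, c <> 0} D^*_b o D_c.
   The fuel argument n is msize a. *)
Fixpoint sinv_aux (D : midx p -> A -> A) (n : nat) (a : midx p) (x : A) : A :=
  match n with
  | 0 => x
  | n'.+1 => if misz a then x
             else - conv a (fun b c => if misz c then 0
                                       else sinv_aux D n' b (D c x))
  end.

Definition sinv (D : midx p -> A -> A) (a : midx p) (x : A) : A :=
  sinv_aux D (msize a) a x.

(* d_R(r) = sum_alpha r_alpha d(s^alpha); the coefficient at nu only involves
   alpha with |alpha| <= |nu| + 1 (d(s^alpha) has order >= |alpha| - 1), so the
   sum is taken over the finite box alpha_i <= |nu|+1, containing all of them. *)
Definition dR (d : (midx p -> k) -> (midx p -> k)) (r : midx p -> A -> A)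
    (nu : midx p) (x : A) : A :=
  \sum_(b : {ffun 'I_p -> 'I_(msize nu).+2}) d (mono k (mi_of b)) nu *: r (mi_of b) x.

Definition epsd (d : (midx p -> k) -> (midx p -> k)) (D : midx p -> A -> A)
    (a : midx p) (x : A) : A :=
  conv a (fun b c => sinv D b (dR d D c x)).

Definition eps (D : midx p -> A -> A) (a : midx p) (x : A) : A :=
  conv a (fun b c => sinv D b (D c x *+ msize c)).

End Series.
End Defs.

(* Main.v *)
Require Import Defs.
From HB Require Import structures.
From mathcomp Require Import all_boot all_order all_algebra.
From Stdlib Require Import FunctionalExtensionality.
From mathcomp Require Import zify.
Set Implicit Arguments. Unset Strict Implicit. Unset Printing Implicit Defensive.
Import GRing.Theory.
Local Open Scope ring_scope.

Section Multi.
Variable p : nat.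
Local Notation M := (midx p).
Definition B (N : nat) := {ffun 'I_p -> 'I_N}.
Definition mi N (b : B N) : M := mi_of b.
Definition meq (x y : M) : bool := [forall i, x i == y i].
Definition madd (x y : M) : M := fun i => (x i + y i)%N.

Lemma meqP x y : reflect (x = y) (meq x y).
Proof.
apply: (iffP forallP) => [h|->]; last by move=> i.
apply: functional_extensionality => i; exact/eqP.
Qed.

Lemma miE N (b : B N) i : mi b i = b i. Proof. by []. Qed.

Variable V : zmodType.

Lemma sum_delta N (g : M) (H : M -> V) :
  \sum_(b : B N) (if meq (mi b) g then H (mi b) else 0)
  = if [forall i, g i < N]%N then H g else 0.
Proof.
case: forallP => [hg|hg].
  pose b0 : B N := [ffun i => Ordinal (hg i)].
  have e0 : mi b0 = g by apply: functional_extensionality => i; rewrite /mi /mi_of ffunE.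
  rewrite (bigD1 b0) //= e0.
  have -> : meq g g by apply/meqP.
  rewrite big1 ?addr0 // => b nb.
  case: meqP => // eb; case/eqP: nb; apply/ffunP => i; apply/val_inj.
  by rewrite ffunE /= -eb.
rewrite big1 // => b _; case: meqP => // eb; case: hg => i; rewrite -eb; exact: ltn_ord.
Qed.


Lemma mle_msize (a : M) i : (a i <= msize a)%N.
Proof. by rewrite /msize (bigD1 i) //= leq_addr. Qed.

Lemma meq_add_split (b c a : M) : meq (madd b c) a = mle b a && meq c (msub a b).
Proof.
apply/idP/andP => [/meqP <-|[/forallP hle /forallP heq]].
  split; apply/forallP => i; rewrite /madd /msub ?leq_addr ?addKn //.
apply/forallP => i; rewrite /madd (eqP (heq i)) /msub subnKC //; exact: hle.
Qed.

Lemma box_resize N1 N2 (P : pred M) (G : M -> V) :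
  (forall g, P g -> [forall i, g i < N1]%N && [forall i, g i < N2]%N) ->
  \sum_(b : B N1 | P (mi b)) G (mi b) = \sum_(b : B N2 | P (mi b)) G (mi b).
Proof.
move=> hP.
transitivity (\sum_(b : B N1 | P (mi b)) \sum_(c : B N2)
    (if meq (mi c) (mi b) then G (mi c) else 0)).
  apply: eq_bigr => b Pb; rewrite sum_delta; case/andP: (hP _ Pb) => _ ->.
  by [].
rewrite exchange_big /= [RHS]big_mkcond /=; apply: eq_bigr => c _.
rewrite big_mkcond /=.
transitivity (\sum_(b : B N1) (if meq (mi b) (mi c) then
                 (if P (mi c) then G (mi c) else 0) else 0)).
  apply: eq_bigr => b _; case: (meqP (mi b) (mi c)) => [->|ne].
    by have -> : meq (mi c) (mi c) by apply/meqP.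
  by case: meqP => [e|]; [case: ne|case: (P _)].
rewrite (sum_delta N1 (mi c) (fun _ => if P (mi c) then G (mi c) else 0)).
case Pc: (P (mi c)) => //.
by case/andP: (hP _ Pc) => ->.
by case: ifP.
Qed.


Lemma conv_pair (a : M) N (F : M -> M -> V) : [forall i, a i < N]%N ->
  conv a F = \sum_(b : B N) \sum_(c : B N)
     (if meq (madd (mi b) (mi c)) a then F (mi b) (mi c) else 0).
Proof.
move=> /forallP haN.
transitivity (\sum_(b : B N) (if mle (mi b) a then F (mi b) (msub a (mi b)) else 0)).
  rewrite -big_mkcond /=.
  rewrite /conv (@box_resize (msize a).+1 N (fun g => mle g a)
     (fun g => F g (msub a g))) //.
  move=> g /forallP hg; apply/andP; split; apply/forallP => i.
    exact: leq_trans (hg i) (mle_msize a i).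
  exact: leq_ltn_trans (hg i) (haN i).
apply: eq_bigr => b _.
under eq_bigr => c _ do rewrite meq_add_split.
case: ifP => hle.
  rewrite sum_delta; case: forallP => // -[] i.
  exact: leq_ltn_trans (leq_subr _ _) (haN i).
by rewrite big1.
Qed.


Lemma maddC (x y : M) : madd x y = madd y x.
Proof. by apply: functional_extensionality => i; rewrite /madd addnC. Qed.
Lemma maddA (x y z : M) : madd x (madd y z) = madd (madd x y) z.
Proof. by apply: functional_extensionality => i; rewrite /madd addnA. Qed.

Lemma meq_sym x y : meq x y = meq y x.
Proof. by apply/meqP/meqP => ->. Qed.

Lemma madd_bound (x y a : M) N : [forall i, a i < N]%N -> meq (madd x y) a ->
  [forall i, x i < N]%N.
Proof.
move=> /forallP h /meqP e; apply/forallP => i.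
apply: leq_ltn_trans (h i); rewrite -e /madd leq_addr //.
Qed.

Lemma conv_swap (a : M) (F : M -> M -> V) : conv a F = conv a (fun b c => F c b).
Proof.
have hN : [forall i, a i < (msize a).+1]%N.
  by apply/forallP => i; rewrite ltnS mle_msize.
rewrite !(conv_pair _ hN) exchange_big /=.
apply: eq_bigr => c _; apply: eq_bigr => b _; by rewrite maddC.
Qed.

Lemma reorder4 (I J K L : finType) (F : I -> J -> K -> L -> V) :
  \sum_(b : I) \sum_(c : J) \sum_(x : K) \sum_(y : L) F b c x y =
  \sum_(x : K) \sum_(y : L) \sum_(c : J) \sum_(b : I) F b c x y.
Proof.
rewrite exchange_big /=.
under eq_bigr => c _ do rewrite exchange_big /=.
under eq_bigr => c _ do under eq_bigr => x _ do rewrite exchange_big /=.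
rewrite exchange_big /=.
by under eq_bigr => x _ do rewrite exchange_big /=.
Qed.

Lemma reorder3 (J K L : finType) (F : J -> K -> L -> V) :
  \sum_(c : J) \sum_(x : K) \sum_(y : L) F c x y =
  \sum_(x : K) \sum_(y : L) \sum_(c : J) F c x y.
Proof.
rewrite exchange_big /=.
by under eq_bigr => x _ do rewrite exchange_big /=.
Qed.

Definition T3 N (a : M) (f : M -> M -> M -> V) :=
  \sum_(x : B N) \sum_(y : B N) \sum_(z : B N)
    (if meq (madd (madd (mi x) (mi y)) (mi z)) a then f (mi x) (mi y) (mi z) else 0).

Lemma tripL N (a : M) f : [forall i, a i < N]%N ->
  conv a (fun b c => conv b (fun b1 b2 => f b1 b2 c)) = T3 N a f.
Proof.
move=> haN; rewrite (conv_pair _ haN).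
transitivity (\sum_(b : B N) \sum_(c : B N) \sum_(x : B N) \sum_(y : B N)
   (if meq (mi b) (madd (mi x) (mi y)) then
     (if meq (madd (madd (mi x) (mi y)) (mi c)) a then f (mi x) (mi y) (mi c) else 0)
    else 0)).
  apply: eq_bigr => b _; apply: eq_bigr => c _.
  case: ifP => hbc.
    rewrite (conv_pair _ (madd_bound haN hbc)).
    apply: eq_bigr => x _; apply: eq_bigr => y _.
    rewrite meq_sym; case: meqP => [e|//].
    by rewrite -e hbc.
  rewrite big1 // => x _; rewrite big1 // => y _.
  by case: meqP => [<-|]; rewrite ?hbc.
rewrite reorder4 /T3; apply: eq_bigr => x _; apply: eq_bigr => y _.
apply: eq_bigr => z _.
rewrite (sum_delta N (madd (mi x) (mi y))
   (fun _ => if meq (madd (madd (mi x) (mi y)) (mi z)) a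
             then f (mi x) (mi y) (mi z) else 0)).
case: ifP => // hb; case: ifP => // hc.
by rewrite (madd_bound haN hc) in hb.
Qed.

Lemma tripR N (a : M) f : [forall i, a i < N]%N ->
  conv a (fun b c => conv c (fun c1 c2 => f b c1 c2)) = T3 N a f.
Proof.
move=> haN; rewrite (conv_pair _ haN).
transitivity (\sum_(b : B N) \sum_(c : B N) \sum_(x : B N) \sum_(y : B N)
   (if meq (mi c) (madd (mi x) (mi y)) then
     (if meq (madd (madd (mi b) (mi x)) (mi y)) a then f (mi b) (mi x) (mi y) else 0)
    else 0)).
  apply: eq_bigr => b _; apply: eq_bigr => c _.
  case: ifP => hbc.
    have hc : [forall i, mi c i < N]%N by rewrite maddC in hbc; exact: madd_bound haN hbc.
    rewrite (conv_pair _ hc).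
    apply: eq_bigr => x _; apply: eq_bigr => y _.
    rewrite meq_sym; case: meqP => [e|//].
    by rewrite -maddA -e hbc.
  rewrite big1 // => x _; rewrite big1 // => y _.
  case: meqP => [e|//]; by rewrite -maddA -e hbc.
rewrite /T3; apply: eq_bigr => b _; rewrite reorder3.
apply: eq_bigr => x _; apply: eq_bigr => y _.
rewrite (sum_delta N (madd (mi x) (mi y))
   (fun _ => if meq (madd (madd (mi b) (mi x)) (mi y)) a
             then f (mi b) (mi x) (mi y) else 0)).
case: ifP => // hb; case: ifP => // hc.
rewrite -maddA maddC in hc.
by rewrite (madd_bound haN hc) in hb.
Qed.

Lemma conv_unitL (a u : M) (G : M -> V) :
  conv a (fun b c => if meq b u then G c else 0) =
  if mle u a then G (msub a u) else 0.
Proof.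
rewrite /conv big_mkcond /=.
transitivity (\sum_(b : B (msize a).+1) (if meq (mi b) u then
    (if mle u a then G (msub a u) else 0) else 0)).
  apply: eq_bigr => b _; rewrite /mi.
  by case: (meqP (mi_of b) u) => [->|]; case: ifP.
rewrite (sum_delta _ u (fun _ => if mle u a then G (msub a u) else 0)).
case: ifP => //; case: ifP => // /forallP h /forallP [] i.
by rewrite ltnS (leq_trans (h i) (mle_msize a i)).
Qed.

Lemma conv_unitR (a u : M) (G : M -> V) :
  conv a (fun b c => if meq c u then G b else 0) =
  if mle u a then G (msub a u) else 0.
Proof. by rewrite conv_swap conv_unitL. Qed.

End Multi.

Section Series1.
Variables (k : comNzRingType) (A : comAlgType k) (p : nat).
Local Notation M := (midx p).

Lemma klin_add (f : A -> A) : klinear f -> forall x y, f (x + y) = f x + f y.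
Proof. by move=> h x y; have := h 1 x y; rewrite !scale1r. Qed.

Lemma klin0 (f : A -> A) : klinear f -> f 0 = 0.
Proof.
move=> h; have e := klin_add h 0 0; rewrite addr0 in e.
by apply: (@addrI _ (f 0)); rewrite addr0 -e.
Qed.

Lemma klinN (f : A -> A) : klinear f -> forall x, f (- x) = - f x.
Proof.
move=> h x; apply/eqP; rewrite -subr_eq0 opprK -klin_add // addNr klin0 //.
Qed.

Lemma klinB (f : A -> A) : klinear f -> forall x y, f (x - y) = f x - f y.
Proof. by move=> h x y; rewrite klin_add // klinN. Qed.

Lemma klinZ (f : A -> A) : klinear f -> forall (c : k) x, f (c *: x) = c *: f x.
Proof. by move=> h c x; rewrite -[c *: x]addr0 h klin0 // addr0. Qed.

Lemma klin_sum (f : A -> A) (I : Type) (r : seq I) (P : pred I) (F : I -> A) :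
  klinear f -> f (\sum_(i <- r | P i) F i) = \sum_(i <- r | P i) f (F i).
Proof. by move=> h; apply: (big_morph f (klin_add h) (klin0 h)). Qed.

Lemma klin_conv (f : A -> A) (a : M) (F : M -> M -> A) :
  klinear f -> f (conv a F) = conv a (fun b c => f (F b c)).
Proof. by move=> h; rewrite /conv klin_sum. Qed.

Lemma klin_id : klinear (fun x : A => x). Proof. by []. Qed.

Lemma klin_comp (f g : A -> A) : klinear f -> klinear g -> klinear (fun x => f (g x)).
Proof. by move=> hf hg c x y; rewrite hg hf. Qed.

Lemma klin_convF (a : M) (F : M -> M -> A -> A) :
  (forall b c, klinear (F b c)) -> klinear (fun x => conv a (fun b c => F b c x)).
Proof.
move=> h c0 x y; rewrite /conv scaler_sumr -big_split /=.
by apply: eq_bigr => b _; rewrite h.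
Qed.

Lemma conv_ext (a : M) (F G : M -> M -> A) :
  (forall b, mle b a -> F b (msub a b) = G b (msub a b)) -> conv a F = conv a G.
Proof. by move=> h; apply: eq_bigr => b hb; rewrite h. Qed.

Lemma convD (a : M) (F G : M -> M -> A) :
  conv a (fun b c => F b c + G b c) = conv a F + conv a G.
Proof. by rewrite /conv big_split. Qed.

Lemma convB (a : M) (F G : M -> M -> A) :
  conv a (fun b c => F b c - G b c) = conv a F - conv a G.
Proof. by rewrite /conv sumrB. Qed.

Lemma conv0 (a : M) : conv a (fun _ _ => (0 : A)) = 0.
Proof. by rewrite /conv big1. Qed.

End Series1.

Section MIdx.
Variable p : nat.
Local Notation M := (midx p).

Lemma msize_add (x y : M) : msize (madd x y) = (msize x + msize y)%N.
Proof. by rewrite /msize /madd big_split. Qed.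

Lemma mle_size (b a : M) : mle b a -> (msize b <= msize a)%N.
Proof. by move=> /forallP h; rewrite /msize; apply: leq_sum => i _; exact: h. Qed.

Lemma msize_sub (a b : M) : mle b a -> msize (msub a b) = (msize a - msize b)%N.
Proof. by move=> /forallP h; rewrite /msize /msub sumnB // => i _; exact: h. Qed.

Lemma misz_size (x : M) : misz x = (msize x == 0)%N.
Proof. by rewrite /msize sum_nat_eq0. Qed.

Lemma misz_eq (x : M) : misz x -> x = @mzero p.
Proof. by move=> /forallP h; apply: functional_extensionality => i; exact/eqP. Qed.

Lemma misz0 : misz (@mzero p). Proof. by apply/forallP. Qed.

Lemma misz_meq (x : M) : misz x = meq x (@mzero p). Proof. by []. Qed.

Lemma mle_refl (a : M) : mle a a. Proof. by apply/forallP. Qed.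
Lemma mle0 (a : M) : mle (@mzero p) a. Proof. by apply/forallP. Qed.
Lemma mle_sub (a b : M) : mle (msub a b) a.
Proof. by apply/forallP => i; rewrite /msub leq_subr. Qed.

Lemma msub0 (a : M) : msub a (@mzero p) = a.
Proof. by apply: functional_extensionality => i; rewrite /msub subn0. Qed.

Lemma msub_add (a b : M) : mle b a -> madd b (msub a b) = a.
Proof.
move=> /forallP h; apply: functional_extensionality => i.
by rewrite /madd /msub subnKC //; exact: h.
Qed.

Lemma msize_sub_lt (a b : M) : mle b a -> ~~ misz b -> (msize (msub a b) < msize a)%N.
Proof.
move=> hb nz; rewrite msize_sub // misz_size in nz *.
have := mle_size hb; move: nz; case: (msize b) => // n _ h.
by rewrite ltn_subrL /= (leq_trans _ h).
Qed.

Lemma mle_mzero (b : M) : mle b (@mzero p) -> b = @mzero p.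
Proof.
move=> /forallP h; apply: functional_extensionality => i.
by apply/eqP; rewrite -leqn0; exact: h.
Qed.

Lemma msub_self_zero (a b : M) : mle b a -> msub a b = a -> b = @mzero p.
Proof.
move=> /forallP h e; apply: functional_extensionality => i.
have := congr1 (fun f => f i) e; rewrite /msub => e'.
have hi := h i; apply/eqP; rewrite /mzero; move: e' hi.
case: (b i) => // n; case: (a i) => // m e' hi.
have := leq_subr n m; rewrite subSS in e'; rewrite e' => /leq_ltn_trans/(_ (ltnSn m)).
by rewrite ltnn.
Qed.

Lemma coideal_le (Delta : pred M) a b : coideal Delta -> Delta a -> mle b a -> Delta b.
Proof. by move=> [_ h] Da /forallP hb; apply: h Da _ => i; exact: hb. Qed.

Lemma coideal0 (Delta : pred M) : coideal Delta -> Delta (@mzero p).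
Proof. by move=> [[a Da] h]; apply: h Da _. Qed.

End MIdx.

Section Series2.
Variables (k : comNzRingType) (A : comAlgType k) (p : nat).
Local Notation M := (midx p).
Implicit Types (U W : M -> A -> A).

Lemma conv_mzero (F : M -> M -> A) : conv (@mzero p) F = F (@mzero p) (@mzero p).
Proof.
have -> : conv (@mzero p) F = conv (@mzero p) (fun b c =>
    if meq b (@mzero p) then F (@mzero p) (@mzero p) else 0).
  apply: conv_ext => b /mle_mzero ->; rewrite msub0.
  by have -> : meq (@mzero p) (@mzero p) by apply/meqP.
by rewrite conv_unitL mle0.
Qed.

Lemma msize_le_sub (a b : M) : mle b a -> ~~ misz (msub a b) -> (msize b < msize a)%N.
Proof.
move=> hb nz; rewrite -[X in (_ < msize X)%N](msub_add hb) msize_add -{1}[msize b]addn0 ltn_add2l.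
by rewrite lt0n -misz_size.
Qed.

Lemma sinv_fuel2 U : forall n m a x, (msize a <= n)%N -> (msize a <= m)%N ->
  sinv_aux U n a x = sinv_aux U m a x.
Proof.
elim=> [|n IH] [|m] a x //=.
- move=> h _; have -> : misz a by rewrite misz_size -leqn0.
  by [].
- move=> _ h; have -> : misz a by rewrite misz_size -leqn0.
  by [].
- move=> hn hm; case: ifP => // _; congr (- _); apply: conv_ext => b hb.
  case: ifP => // hc; apply: IH.
    by rewrite -ltnS (leq_trans (msize_le_sub hb (negbT hc))).
  by rewrite -ltnS (leq_trans (msize_le_sub hb (negbT hc))).
Qed.

Lemma sinv_fuel U n a x : (msize a <= n)%N -> sinv_aux U n a x = sinv U a x.
Proof. by move=> h; apply: sinv_fuel2. Qed.

Lemma sinv0 U x : sinv U (@mzero p) x = x.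
Proof. by rewrite /sinv; case: (msize _) => //= n; rewrite misz0. Qed.

Lemma sinv_lin U : (forall c, klinear (U c)) -> forall a, klinear (sinv U a).
Proof.
move=> hU a; rewrite /sinv; move: (msize a) => n; elim: n a => [|n IH] b c0 x y //=.
case: (misz b) => //.
have hl := @klin_convF k A p b (fun b c z => if misz c then 0 else sinv_aux U n b (U c z)).
rewrite hl; first by rewrite scalerN opprD.
move=> b1 c1; case: (misz c1); first by move=> ? ? ?; rewrite scaler0 addr0.
exact: klin_comp.
Qed.

Lemma left_inv U (hU0 : forall x, U (@mzero p) x = x) a x :
  conv a (fun b c => sinv U b (U c x)) = if misz a then x else 0.
Proof.
case: ifP => ha.
  by rewrite (misz_eq ha) conv_mzero sinv0 hU0.
have -> : conv a (fun b c => sinv U b (U c x)) =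
  conv a (fun b c => (if meq c (@mzero p) then sinv U b x else 0) +
                     (if misz c then 0 else sinv U b (U c x))).
  apply: conv_ext => b hb; rewrite -misz_meq; case: ifP => hc.
    by rewrite (misz_eq hc) hU0 addr0.
  by rewrite add0r.
rewrite convD conv_unitR mle0 msub0.
have : sinv U a x = - conv a (fun b c => if misz c then 0 else sinv U b (U c x)).
  rewrite /sinv; move: ha; rewrite misz_size; case e: (msize a) => [|n] //= ha.
  have -> : misz a = false by rewrite misz_size e.
  congr (- _); apply: conv_ext => b hb; case: ifP => // hc.
  rewrite -/(sinv U b _) sinv_fuel // -ltnS -e.
  exact: msize_le_sub hb (negbT hc).
by move=> ->; rewrite addNr.
Qed.

Definition comp U W (a : M) (x : A) := conv a (fun b c => U b (W c x)).
Definition Id (a : M) (x : A) := if misz a then x else 0.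

Lemma comp_assoc U V W : (forall b, klinear (U b)) ->
  forall a x, comp U (comp V W) a x = comp (comp U V) W a x.
Proof.
move=> hU a x; rewrite /comp.
have hN : [forall i, a i < (msize a).+1]%N.
  by apply/forallP => i; rewrite ltnS mle_msize.
have -> : (fun b c => U b (conv c (fun b0 c0 => V b0 (W c0 x)))) =
          (fun b c => conv c (fun c1 c2 => U b (V c1 (W c2 x)))).
  by apply: functional_extensionality => b; apply: functional_extensionality => c;
     rewrite klin_conv.
by rewrite (tripR (fun b c1 c2 => U b (V c1 (W c2 x))) hN)
           (tripL (fun b c1 c2 => U b (V c1 (W c2 x))) hN).
Qed.

Lemma comp_Id_r U : (forall b, klinear (U b)) -> forall a x, comp U Id a x = U a x.
Proof.
move=> hU a x; rewrite /comp /Id.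
have -> : conv a (fun b c => U b (if misz c then x else 0)) =
          conv a (fun b c => if meq c (@mzero p) then U b x else 0).
  by apply: conv_ext => b _; rewrite -misz_meq; case: ifP => //; rewrite klin0.
by rewrite conv_unitR mle0 msub0.
Qed.

Lemma comp_Id_l U a x : comp Id U a x = U a x.
Proof.
rewrite /comp /Id.
have -> : conv a (fun b c => if misz b then U c x else 0) =
          conv a (fun b c => if meq b (@mzero p) then U c x else 0) by [].
by rewrite conv_unitL mle0 msub0.
Qed.

Lemma right_inv U : (forall c, klinear (U c)) -> (forall x, U (@mzero p) x = x) ->
  forall a x, conv a (fun b c => U b (sinv U c x)) = if misz a then x else 0.
Proof.
move=> hU hU0.
set S := sinv U; set T := sinv S.
have hS : forall c, klinear (S c) by exact: sinv_lin.
have hT : forall c, klinear (T c) by exact: sinv_lin.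
have hS0 : forall x, S (@mzero p) x = x by move=> x; exact: sinv0.
have eTU : T = U.
  apply: functional_extensionality => a; apply: functional_extensionality => x.
  have e1 : comp T (comp S U) a x = T a x.
    rewrite -(comp_Id_r hT a x) /comp; apply: conv_ext => b _.
    by rewrite left_inv.
  have e2 : comp (comp T S) U a x = U a x.
    rewrite -(comp_Id_l U a x) /comp; apply: conv_ext => b _.
    by rewrite left_inv.
  by rewrite -e1 comp_assoc // e2.
move=> a x; rewrite -eTU; exact: left_inv.
Qed.

End Series2.

Section Tri.
Variables (p : nat) (V : zmodType).
Local Notation M := (midx p).

Lemma T3_swap23 N (a : M) (f : M -> M -> M -> V) :
  T3 N a f = T3 N a (fun x y z => f x z y).
Proof.
rewrite /T3; apply: eq_bigr => x _; rewrite exchange_big /=.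
apply: eq_bigr => z _; apply: eq_bigr => y _.
by rewrite -!maddA (maddC (mi y)).
Qed.

End Tri.

Section Series3.
Variables (k : comNzRingType) (A : comAlgType k) (p : nat).
Local Notation M := (midx p).

Lemma conv_mull (x : A) (a : M) (F : M -> M -> A) :
  x * conv a F = conv a (fun b c => x * F b c).
Proof. by rewrite /conv mulr_sumr. Qed.

Lemma conv_mulr (x : A) (a : M) (F : M -> M -> A) :
  conv a F * x = conv a (fun b c => F b c * x).
Proof. by rewrite /conv mulr_suml. Qed.

Lemma hN_of (a : M) : [forall i, a i < (msize a).+1]%N.
Proof. by apply/forallP => i; rewrite ltnS mle_msize. Qed.

Lemma R1 (a : M) (P : M -> A) (Q : M -> M -> A) :
  conv a (fun b c => conv b (fun b1 b2 => P b1 * Q b2 c)) =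
  conv a (fun b1 c' => P b1 * conv c' (fun b2 c => Q b2 c)).
Proof.
rewrite (tripL (fun b1 b2 c => P b1 * Q b2 c) (hN_of a)).
have -> : (fun b1 c' => P b1 * conv c' (fun b2 c => Q b2 c)) =
          (fun b1 c' => conv c' (fun b2 c => P b1 * Q b2 c)).
  by apply: functional_extensionality => b; apply: functional_extensionality => c;
     rewrite conv_mull.
by rewrite (tripR (fun b1 b2 c => P b1 * Q b2 c) (hN_of a)).
Qed.

Lemma R2 (a : M) (P : M -> A) (Q : M -> M -> A) :
  conv a (fun b c => conv b (fun b1 b2 => Q b1 c * P b2)) =
  conv a (fun b g => conv b (fun b1 c => Q b1 c) * P g).
Proof.
rewrite (tripL (fun b1 b2 c => Q b1 c * P b2) (hN_of a)).
have -> : (fun b g => conv b (fun b1 c => Q b1 c) * P g) =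
          (fun b g => conv b (fun b1 c => Q b1 c * P g)).
  by apply: functional_extensionality => b; apply: functional_extensionality => c;
     rewrite conv_mulr.
by rewrite (tripL (fun b1 c g => Q b1 c * P g) (hN_of a)) T3_swap23.
Qed.

Lemma conv_eq0 (a : M) (F : M -> M -> A) : (forall b c, F b c = 0) -> conv a F = 0.
Proof. by move=> h; rewrite /conv big1. Qed.

Lemma msize0 : msize (@mzero p) = 0%N.
Proof. by apply/eqP; rewrite -misz_size misz0. Qed.

End Series3.

Section Gen.
Variables (k : comNzRingType) (A : comAlgType k) (p : nat).
Local Notation M := (midx p).
Variables (Delta : pred M) (hDelta : coideal Delta) (U : M -> A -> A).
Hypotheses (hU : forall c, klinear (U c)) (hU0 : forall x, U (@mzero p) x = x).

Lemma comp_US_E (E : M -> A -> A) a z :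
  conv a (fun b c => U b (comp (sinv U) E c z)) = E a z.
Proof.
rewrite -/(comp U (comp (sinv U) E) a z) comp_assoc //.
rewrite -(comp_Id_l E a z) /comp; apply: conv_ext => b _.
by rewrite right_inv.
Qed.

Lemma strong_ind (P : M -> Prop) :
  (forall a, Delta a -> (forall c, Delta c -> (msize c < msize a)%N -> P c) -> P a) ->
  forall a, Delta a -> P a.
Proof.
move=> h a; move: (leqnn (msize a)); move: {2}(msize a) => n.
elim: n a => [|n IH] a ha Da; apply: h => // c Dc hc.
  by move: (leq_trans hc ha).
by apply: IH => //; rewrite -ltnS (leq_trans hc ha).
Qed.

Hypothesis hHS : forall a, Delta a -> forall x y : A,
  U a (x * y) = conv a (fun b c => U b x * U c y).

Lemma gen_der (E : M -> A -> A) :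
  (forall a, Delta a -> forall x y : A,
     E a (x * y) = conv a (fun b c => E b x * U c y + U b x * E c y)) ->
  forall a, Delta a -> forall x y : A,
  comp (sinv U) E a (x * y) = x * comp (sinv U) E a y + comp (sinv U) E a x * y.
Proof.
move=> hE a0 Da0 x y.
set F := comp (sinv U) E.
pose G c := F c (x * y) - (x * F c y + F c x * y).
suff: G a0 = 0 by move/eqP; rewrite subr_eq0 => /eqP.
move: a0 Da0; apply: strong_ind => a Da IH.
have key : conv a (fun b c => U b (G c)) = 0.
  have -> : conv a (fun b c => U b (G c)) =
    conv a (fun b c => U b (F c (x * y))) -
    (conv a (fun b c => U b x * E c y) + conv a (fun b c => E b x * U c y)).
    rewrite /G; have -> : conv a (fun b c => U b (F c (x * y) - (x * F c y + F c x * y)))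
      = conv a (fun b c => U b (F c (x * y))) -
        (conv a (fun b c => U b (x * F c y)) + conv a (fun b c => U b (F c x * y))).
      transitivity (conv a (fun b c => U b (F c (x * y)) -
                    (U b (x * F c y) + U b (F c x * y)))).
        by apply: conv_ext => b _; rewrite (klinB (hU b)) (klin_add (hU b)).
      rewrite -(convD a (fun b c => U b (x * F c y)) (fun b c => U b (F c x * y))).
      exact: (convB a (fun b c => U b (F c (x * y)))
                 (fun b c => U b (x * F c y) + U b (F c x * y))).
    congr (_ - (_ + _)).
      transitivity (conv a (fun b c => conv b (fun b1 b2 => U b1 x * U b2 (F c y)))).
        apply: conv_ext => b hb; rewrite hHS //; exact: coideal_le hDelta Da hb.
      apply: etrans (R1 a (fun b => U b x) (fun b c => U b (F c y))) _.
      by apply: conv_ext => b _; rewrite comp_US_E.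
    transitivity (conv a (fun b c => conv b (fun b1 b2 => U b1 (F c x) * U b2 y))).
      apply: conv_ext => b hb; rewrite hHS //; exact: coideal_le hDelta Da hb.
    apply: etrans (R2 a (fun b => U b y) (fun b c => U b (F c x))) _.
    by apply: conv_ext => b _; rewrite comp_US_E.
  rewrite comp_US_E hE // -convD.
  have -> : conv a (fun b c => E b x * U c y + U b x * E c y) =
            conv a (fun b c => U b x * E c y + E b x * U c y).
    by apply: conv_ext => b _; rewrite addrC.
  by rewrite subrr.
rewrite -key.
have -> : conv a (fun b c => U b (G c)) = conv a (fun b c => if meq c a then G a else 0).
  apply: conv_ext => b hb; case: meqP => e.
    by rewrite e (msub_self_zero hb e) hU0.
  rewrite IH ?klin0 //; first exact: coideal_le hDelta Da (mle_sub a b).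
  apply: msize_sub_lt => //; apply/negP => /misz_eq eb; apply: e.
  by rewrite eb msub0.
by rewrite conv_unitR mle_refl.
Qed.

Lemma gen_lin (E : M -> A -> A) : (forall c, klinear (E c)) ->
  forall a, klinear (comp (sinv U) E a).
Proof.
move=> hE a; apply: klin_convF => b c; apply: klin_comp => //; exact: sinv_lin.
Qed.

End Gen.

Section Gen2.
Variables (k : comNzRingType) (A : comAlgType k) (p : nat).
Local Notation M := (midx p).
Variables (Delta : pred M) (hDelta : coideal Delta) (U : M -> A -> A).
Hypotheses (hU : forall c, klinear (U c)) (hU0 : forall x, U (@mzero p) x = x).
Hypothesis hinv : forall n : nat, exists y : k, y * (n.+1)%:R = 1.

Lemma eps_comp a z : eps U a z = comp (sinv U) (fun c w => U c w *+ msize c) a z.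
Proof. by []. Qed.

Lemma eps0 z : eps U (@mzero p) z = 0.
Proof. by rewrite /eps conv_mzero msize0 mulr0n klin0 //; exact: sinv_lin. Qed.

Lemma gen_HS :
  (forall a, Delta a -> forall x y : A, eps U a (x * y) = x * eps U a y + eps U a x * y) ->
  forall a, Delta a -> forall x y : A,
  U a (x * y) = conv a (fun b c => U b x * U c y).
Proof.
move=> hder a0 Da0; move: a0 Da0; apply: (strong_ind (Delta := Delta)) => a Da IH x y.
case: (boolP (misz a)) => [/misz_eq ->|nz].
  by rewrite conv_mzero !hU0.
have hUE : forall a z, conv a (fun b c => U b (eps U c z)) = U a z *+ msize a.
  move=> a1 z; exact: (comp_US_E hU hU0 (fun c w => U c w *+ msize c) a1 z).
apply/eqP; rewrite -subr_eq0; apply/eqP.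
set v := _ - _.
have hv : v *+ msize a = 0.
  rewrite /v mulrnBl -hUE.
  have -> : conv a (fun b c => U b (eps U c (x * y))) =
    conv a (fun b c => conv b (fun b1 b2 => U b1 x * U b2 (eps U c y))) +
    conv a (fun b c => conv b (fun b1 b2 => U b1 (eps U c x) * U b2 y)).
    rewrite -convD; apply: conv_ext => b hb.
    have Dc : Delta (msub a b) by exact: coideal_le hDelta Da (mle_sub a b).
    rewrite hder // klin_add //.
    case: (boolP (misz (msub a b))) => [/misz_eq ->|nzc].
      rewrite !eps0 mulr0 mul0r klin0 // !conv_eq0 ?addr0 // => b1 c1;
        by rewrite klin0 // ?mulr0 ?mul0r.
    have hb' := msize_le_sub hb nzc.
    by rewrite !IH //; exact: coideal_le hDelta Da hb.
  rewrite (R1 a (fun b => U b x) (fun b c => U b (eps U c y))).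
  rewrite (R2 a (fun b => U b y) (fun b c => U b (eps U c x))).
  have e1 : conv a (fun b1 c' => U b1 x * conv c' (fun b2 c => U b2 (eps U c y))) =
            conv a (fun b c => U b x * (U c y *+ msize c)).
    by apply: conv_ext => b _; rewrite hUE.
  have e2 : conv a (fun b g => conv b (fun b1 c => U b1 (eps U c x)) * U g y) =
            conv a (fun b c => (U b x *+ msize b) * U c y).
    by apply: conv_ext => b _; rewrite hUE.
  rewrite e1 e2.
  have -> : conv a (fun b c => U b x * U c y) *+ msize a =
     conv a (fun b c => U b x * (U c y *+ msize c)) + conv a (fun b c => (U b x *+ msize b) * U c y).
    rewrite -(convD a (fun b c => U b x * (U c y *+ msize c)) (fun b c => (U b x *+ msize b) * U c y)).
    rewrite /conv -sumrMnl; apply: eq_bigr => b hb.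
    by rewrite mulrnAr mulrnAl -mulrnDr addnC -msize_add msub_add.
  by rewrite subrr.
have [y0 hy0] := hinv (msize a).-1.
have ha : (0 < msize a)%N by rewrite lt0n -misz_size.
rewrite prednK // in hy0.
by rewrite -[v]scale1r -hy0 -scalerA scaler_nat hv scaler0.
Qed.

End Gen2.

Section Mono.
Variables (k : comNzRingType) (p : nat).
Local Notation M := (midx p).

Lemma smul_mono_l (f : M -> k) u a :
  smul (mono k u) f a = if mle u a then f (msub a u) else 0.
Proof.
rewrite /smul.
have -> : conv a (fun b c => mono k u b * f c) =
          conv a (fun b c => if meq b u then f c else 0).
  by rewrite /conv; apply: eq_bigr => b _; rewrite /mono /meq; case: ifP;
     rewrite ?mul1r ?mul0r.
exact: conv_unitL.
Qed.

Lemma smul_mono_r (f : M -> k) u a :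
  smul f (mono k u) a = if mle u a then f (msub a u) else 0.
Proof.
rewrite /smul conv_swap.
have -> : conv a (fun b c => f c * mono k u b) =
          conv a (fun b c => if meq b u then f c else 0).
  by rewrite /conv; apply: eq_bigr => b _; rewrite /mono /meq; case: ifP;
     rewrite ?mulr1 ?mulr0.
exact: conv_unitL.
Qed.

Lemma mono_add (u v : M) : mono k (madd u v) = smul (mono k u) (mono k v).
Proof.
apply: functional_extensionality => a; rewrite smul_mono_l.
rewrite /mono -/(meq a (madd u v)) -/(meq (msub a u) v) meq_sym meq_add_split.
by case: (mle u a) => //=; rewrite meq_sym.
Qed.

Lemma mono_ne (b a : M) : ~~ meq a b -> mono k b a = 0.
Proof. by rewrite /mono -/(meq a b) => /negbTE ->. Qed.

End Mono.

Section DR.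
Variables (k : comNzRingType) (A : comAlgType k) (p : nat).
Local Notation M := (midx p).
Variables (Delta : pred M) (hDelta : coideal Delta).
Variable d : (M -> k) -> (M -> k).
Hypothesis hd : isSDer Delta d.

Lemma d_zero : forall a, Delta a -> d (fun _ => 0) a = 0.
Proof.
case: hd => hext [hlin _] a Da.
have e1 := hlin 1 (fun _ => 0) (fun _ => 0) a Da.
have h0 : eqD Delta (fun a : M => 1 * (fun _ : M => (0 : k)) a + (fun _ : M => 0) a)
                (fun _ => 0) by move=> ? _; rewrite mulr0 addr0.
have e2 := hext _ _ h0 a Da.
rewrite e2 mul1r in e1.
by apply: (@addrI _ (d (fun _ => 0) a)); rewrite addr0 -e1.
Qed.

Lemma d_zero_on (f : M -> k) : (forall a, Delta a -> f a = 0) ->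
  forall a, Delta a -> d f a = 0.
Proof.
move=> hf a Da; case: hd => hext _.
by rewrite (hext f (fun _ => 0) hf a Da) d_zero.
Qed.

Lemma d_mono_out b : ~~ Delta b -> forall a, Delta a -> d (mono k b) a = 0.
Proof.
move=> nb; apply: d_zero_on => a Da; apply: mono_ne.
by apply/negP => /meqP ea; move: nb; rewrite -ea Da.
Qed.

Definition unitm (i : 'I_p) : M := fun j => nat_of_bool (j == i).

Lemma msize_unitm i : msize (unitm i) = 1%N.
Proof.
rewrite /msize (bigD1 i) //= /unitm eqxx big1 // => j /negbTE ->.
by [].
Qed.

Lemma d_order : forall b a, Delta a -> ((msize a).+1 < msize b)%N -> d (mono k b) a = 0.
Proof.
move=> b; move: (leqnn (msize b)); move: {2}(msize b) => n.
elim: n b => [|n IH] b hb a Da hab; first by move: hb hab; lia.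
have [i hi] : exists i, (0 < b i)%N.
  case: (boolP [exists i, 0 < b i]%N) => [/existsP[i hi]|/existsPn h]; first by exists i.
  have : misz b by apply/forallP => i; have := h i; rewrite lt0n negbK.
  by rewrite misz_size => /eqP e; rewrite e in hab.
have hle : mle (unitm i) b.
  apply/forallP => j; rewrite /unitm; case: (j == i) /eqP => [->|] //.
set b' := msub b (unitm i).
have eb : madd (unitm i) b' = b by exact: msub_add.
have sb' : msize b' = (msize b - 1)%N by rewrite msize_sub // msize_unitm.
case: hd => _ [_ hleib].
rewrite -eb mono_add (hleib _ _ a Da) smul_mono_r smul_mono_l.
case: ifP => [/mle_size h1|_]; first by exfalso; move: h1 hab; rewrite sb'; lia.
case: ifP => [hea|_]; last by rewrite addr0.
have hsa := mle_size hea; rewrite msize_unitm in hsa.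
rewrite IH ?addr0 //.
- by rewrite sb'; move: hb; lia.
- exact: coideal_le hDelta Da (mle_sub a _).
- by rewrite msize_sub // msize_unitm sb'; move: hab hsa; lia.
Qed.

End DR.

Section Resize0.
Variables (p : nat) (V : zmodType).
Local Notation M := (midx p).

Lemma box_resize0 N1 N2 (G : M -> V) :
  (forall g, G g != 0 -> [forall i, g i < N1]%N && [forall i, g i < N2]%N) ->
  \sum_(b : B p N1) G (mi b) = \sum_(b : B p N2) G (mi b).
Proof.
move=> h.
have e : forall N, \sum_(b : B p N) G (mi b) = \sum_(b : B p N | G (mi b) != 0) G (mi b).
  move=> N; rewrite [RHS]big_mkcond; apply: eq_bigr => b _.
  by case: eqP => // ->.
by rewrite !e; apply: (@box_resize p V N1 N2 (fun g => G g != 0) G).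
Qed.

Lemma conv_boxN (a : M) N (F : M -> M -> V) : [forall i, a i < N]%N ->
  conv a F = \sum_(b : B p N) (if mle (mi b) a then F (mi b) (msub a (mi b)) else 0).
Proof.
move=> /forallP haN; rewrite -big_mkcond /=.
rewrite /conv (@box_resize _ _ (msize a).+1 N (fun g => mle g a)
     (fun g => F g (msub a g))) //.
move=> g /forallP hg; apply/andP; split; apply/forallP => i.
  exact: leq_trans (hg i) (mle_msize a i).
exact: leq_ltn_trans (hg i) (haN i).
Qed.

End Resize0.

Section DR2.
Variables (k : comNzRingType) (A : comAlgType k) (p : nat).
Local Notation M := (midx p).
Variables (Delta : pred M) (hDelta : coideal Delta).
Variable d : (M -> k) -> (M -> k).
Hypothesis hd : isSDer Delta d.

Lemma dR_box (U : M -> A -> A) a x N : Delta a -> ((msize a).+2 <= N)%N ->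
  dR d U a x = \sum_(b : B p N) d (mono k (mi b)) a *: U (mi b) x.
Proof.
move=> Da hN; rewrite /dR.
apply: (@box_resize0 p A (msize a).+2 N (fun g => d (mono k g) a *: U g x)).
move=> g hg.
have hs : (msize g <= (msize a).+1)%N.
  rewrite leqNgt; apply/negP => hlt; move: hg.
  by rewrite (d_order hDelta hd Da hlt) scale0r eqxx.
apply/andP; split; apply/forallP => i.
  by rewrite ltnS (leq_trans (mle_msize g i)).
by apply: leq_trans hN; rewrite ltnS (leq_trans (mle_msize g i)).
Qed.

Lemma dR_lin (U : M -> A -> A) : (forall c, klinear (U c)) -> forall a, klinear (dR d U a).
Proof.
move=> hU a c0 x y; rewrite /dR scaler_sumr -big_split /=; apply: eq_bigr => b _.
by rewrite hU scalerDr !scalerA mulrC.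
Qed.


Lemma dR_leib (U : M -> A -> A)
  (hHS : forall b, Delta b -> forall x y : A, U b (x * y) = conv b (fun b1 b2 => U b1 x * U b2 y))
  a (Da : Delta a) (x y : A) :
  dR d U a (x * y) = conv a (fun b c => dR d U b x * U c y + U b x * dR d U c y).
Proof.
have hleib := hd.2.2.
pose N := (msize a).+2.
have hNa : [forall i, a i < N]%N.
  by apply/forallP => i; rewrite /N ltnS (leq_trans (mle_msize a i)).
have hsub : forall b, mle b a -> Delta (msub a b) /\ ((msize (msub a b)).+2 <= N)%N.
  move=> b hb; split; first exact: coideal_le hDelta Da (mle_sub a b).
  by rewrite /N !ltnS mle_size // mle_sub.
transitivity (\sum_(b : B p N) d (mono k (mi b)) a *: conv (mi b) (fun b1 b2 => U b1 x * U b2 y)).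
  apply: eq_bigr => b _; case: (boolP (Delta (mi b))) => Db; first by rewrite hHS.
  by rewrite (d_mono_out hd Db Da) !scale0r.
transitivity (\sum_(b1 : B p N) \sum_(b2 : B p N)
   d (mono k (madd (mi b1) (mi b2))) a *: (U (mi b1) x * U (mi b2) y)).
  transitivity (\sum_(b : B p N) \sum_(b1 : B p N) \sum_(b2 : B p N)
     (if meq (mi b) (madd (mi b1) (mi b2)) then
        d (mono k (madd (mi b1) (mi b2))) a *: (U (mi b1) x * U (mi b2) y) else 0)).
    apply: eq_bigr => b _.
    have hb : [forall i, mi b i < N]%N by apply/forallP => i; exact: ltn_ord.
    rewrite (conv_pair _ hb) scaler_sumr; apply: eq_bigr => b1 _.
    rewrite scaler_sumr; apply: eq_bigr => b2 _.
    rewrite meq_sym; case: meqP => [e|_]; first by rewrite e.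
    by rewrite scaler0.
  rewrite reorder3; apply: eq_bigr => b1 _; apply: eq_bigr => b2 _.
  rewrite (sum_delta N (madd (mi b1) (mi b2))
     (fun _ => d (mono k (madd (mi b1) (mi b2))) a *: (U (mi b1) x * U (mi b2) y))).
  case: (boolP [forall i, madd (mi b1) (mi b2) i < N]%N) => // /forallPn [i hi].
  rewrite (d_order hDelta hd Da) ?scale0r //.
  have := mle_msize (madd (mi b1) (mi b2)) i; move: hi; rewrite /N; lia.
transitivity (\sum_(b1 : B p N) \sum_(b2 : B p N)
   ((if mle (mi b2) a then d (mono k (mi b1)) (msub a (mi b2)) else 0) *:
      (U (mi b1) x * U (mi b2) y)) +
  \sum_(b1 : B p N) \sum_(b2 : B p N)
   ((if mle (mi b1) a then d (mono k (mi b2)) (msub a (mi b1)) else 0) *: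
      (U (mi b1) x * U (mi b2) y))).
  rewrite -big_split; apply: eq_bigr => b1 _; rewrite -big_split; apply: eq_bigr => b2 _.
  by rewrite mono_add (hleib _ _ a Da) smul_mono_r smul_mono_l scalerDl.
rewrite (convD a (fun b c => dR d U b x * U c y) (fun b c => U b x * dR d U c y)).
congr (_ + _).
  rewrite conv_swap (conv_boxN _ hNa) exchange_big /=; apply: eq_bigr => b2 _.
  case: ifP => hle; last by rewrite big1 // => b1 _; rewrite scale0r.
  have [Ds hs] := hsub _ hle.
  rewrite (dR_box U x Ds hs) mulr_suml; apply: eq_bigr => b1 _.
  by rewrite scalerAl.
rewrite (conv_boxN _ hNa); apply: eq_bigr => b1 _.
case: ifP => hle; last by rewrite big1 // => b2 _; rewrite scale0r.
have [Ds hs] := hsub _ hle.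
rewrite (dR_box U y Ds hs) mulr_sumr; apply: eq_bigr => b2 _.
by rewrite scalerAr.
Qed.

End DR2.

Section Chi.
Variables (k : comNzRingType) (A : comAlgType k) (p : nat).
Local Notation M := (midx p).

Definition chi (f : M -> k) : M -> k := fun a => f a *+ msize a.

Lemma chi_SDer (Delta : pred M) : isSDer Delta chi.
Proof.
split; first by move=> f g h a Da; rewrite /chi h.
split; first by move=> c f g a _; rewrite /chi mulrnDl mulrnAr.
move=> f g a _; rewrite /chi /smul /conv -sumrMnl -big_split /=.
apply: eq_bigr => b hb.
by rewrite mulrnAr mulrnAl -mulrnDr -msize_add msub_add.
Qed.

Lemma dR_chi (U : M -> A -> A) c x : dR chi U c x = U c x *+ msize c.
Proof.
rewrite /dR.
transitivity (\sum_(b : B p (msize c).+2)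
   (if meq (mi b) c then U c x *+ msize c else 0)).
  apply: eq_bigr => b _; rewrite /chi /mono -/(meq c (mi b)) meq_sym.
  case: (meqP (mi b) c) => [e|_]; last by rewrite mul0rn scale0r.
  rewrite /mi in e; rewrite e.
  by rewrite scaler_nat.
rewrite (sum_delta _ c (fun _ => U c x *+ msize c)).
case: forallP => // -[] i.
by rewrite ltnS (leq_trans (mle_msize c i)).
Qed.

End Chi.

Theorem mainTheorem13 (k : comNzRingType) (A : comAlgType k) (p : nat)
    (Delta : pred (midx p)) (D : midx p -> A -> A) :
  (forall n : nat, exists y : k, y * (n.+1)%:R = 1) ->
  coideal Delta ->
  inU Delta D ->
  (isHS Delta D <->
     (forall d : (midx p -> k) -> (midx p -> k), isSDer Delta d ->
        forall a, Delta a -> isDer (epsd d D a))) /\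
  (isHS Delta D <-> (forall a, Delta a -> isDer (eps D a))).
Proof.
move=> hinv hDelta [hlin hD0].
pose D' c := if Delta c then D c else (fun _ : A => 0).
have D0 := coideal0 hDelta.
have hD'lin : forall c, klinear (D' c).
  move=> c; rewrite /D'; case: ifP => hc; first exact: hlin.
  by move=> c0 x y /=; rewrite scaler0 addr0.
have hD'0 : forall x, D' (@mzero p) x = x by move=> x; rewrite /D' D0.
have eD : forall a, Delta a -> D' a = D a by move=> a Da; rewrite /D' Da.
have eHS : isHS Delta D <-> (forall a, Delta a -> forall x y,
    D' a (x * y) = conv a (fun b c => D' b x * D' c y)).
  split.
    move=> [_ [_ h]] a Da x y; rewrite eD // h //; apply: conv_ext => b hb.
    rewrite !eD //; [exact: coideal_le hDelta Da (mle_sub a b)|exact: coideal_le hDelta Da hb].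
  move=> h; split => //; split => // a Da x y; rewrite -eD // h //.
  apply: conv_ext => b hb.
  rewrite !eD //; [exact: coideal_le hDelta Da (mle_sub a b)|exact: coideal_le hDelta Da hb].
have esinv : forall a, Delta a -> sinv D a = sinv D' a.
  move=> a Da; apply: functional_extensionality => x; rewrite /sinv.
  move: (msize a) => n; elim: n a Da x => [|n IH] a Da x //=.
  case: ifP => // _; congr (- _); apply: conv_ext => b hb; case: ifP => // _.
  have Db := coideal_le hDelta Da hb.
  by rewrite IH // eD //; exact: coideal_le hDelta Da (mle_sub a b).
have eeps : forall a, Delta a -> eps D a = eps D' a.
  move=> a Da; apply: functional_extensionality => x; apply: conv_ext => b hb.
  rewrite esinv ?eD //; [exact: coideal_le hDelta Da (mle_sub a b)|exact: coideal_le hDelta Da hb].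
have eepsd : forall d, isSDer Delta d -> forall a, Delta a -> epsd d D a = epsd d D' a.
  move=> d hd a Da; apply: functional_extensionality => x; apply: conv_ext => b hb.
  rewrite esinv; last exact: coideal_le hDelta Da hb.
  congr (sinv D' b _); apply: eq_bigr => g _.
  case: (boolP (Delta (mi_of g))) => Dg; first by rewrite eD.
  by rewrite (d_mono_out hd Dg (coideal_le hDelta Da (mle_sub a b))) !scale0r.
have AB : isHS Delta D -> forall d, isSDer Delta d -> forall a, Delta a -> isDer (epsd d D a).
  move=> /eHS hHS d hd a Da; rewrite eepsd //; split.
    exact: (gen_lin hD'lin (dR_lin d hD'lin) a).
  move=> x y.
  exact: (gen_der hDelta hD'lin hD'0 hHS
            (fun a1 Da1 x y => dR_leib hDelta hd hHS Da1 x y) Da x y).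
have BC : (forall d, isSDer Delta d -> forall a, Delta a -> isDer (epsd d D a)) ->
          forall a, Delta a -> isDer (eps D a).
  move=> h a Da; have := h _ (@chi_SDer k p Delta) a Da.
  rewrite eepsd ?eeps //; last exact: chi_SDer.
  have -> // : epsd (@chi k p) D' a = eps D' a.
  apply: functional_extensionality => x; apply: conv_ext => b _.
  by rewrite dR_chi.
have CA : (forall a, Delta a -> isDer (eps D a)) -> isHS Delta D.
  move=> h; apply/eHS => a0 Da0 x0 y0.
  apply: (gen_HS hDelta hD'lin hD'0 hinv _ Da0) => a Da x y.
  by rewrite -eeps //; case: (h a Da).
split; split => //.
- by move=> hb; apply: CA; exact: BC.
- by move=> ha; apply: BC; exact: AB.
Qed.
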